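(* Let ${\bf T}$ be a string of length $N$ over an integer alphabet whose last character ${\bf T}[N]$ is strictly smaller than every other character of ${\bf T}$, and set ${\bf T}[N+1]$ to be a symbol different from all characters of ${\bf T}$. Let $2\le i\le N$ and $t={\bf T}[i]$, and suppose that $\mathrm{suf}(i)$ is either the lexicographically largest L-suffix among all L-suffixes starting with character $t$, or the lexicographically smallest LMS-suffix among all LMS-suffixes starting with character $t$. Then ${\bf T}[i-1]\neq t$. Moreover, with $j=\lfloor i/2\rfloor$, the position $i$ is determined by $j$ and $t$ as follows: if ${\bf T}[2j]\neq {\bf T}[2j+1]$ then $i$ is the unique element of $\{2j,2j+1\}$ with ${\bf T}[i]=t$; otherwise $i=2j$.
   Context: For $1\le i\le N$, $\mathrm{suf}(i)={\bf T}[i\dots N]$. The suffix $\mathrm{suf}(i)$ is an S-suffix if $i=N$ or $\mathrm{suf}(i)$ is lexicographically smaller than $\mathrm{suf}(i+1)$; otherwise it is an L-suffix. An S-suffix $\mathrm{suf}(i)$ is an LMS-suffix if $i>1$ and $\mathrm{suf}(i-1)$ is an L-suffix. *)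

(* Defs.v *)
(* Strings are seq nat (integer alphabet), positions 1-indexed. *)
From mathcomp Require Import all_boot.
Set Implicit Arguments. Unset Strict Implicit. Unset Printing Implicit Defensive.

Fixpoint lex_lt (s t : seq nat) : bool :=
  match s, t with
  | [::], [::] => false
  | [::], _ :: _ => true
  | _ :: _, [::] => false
  | x :: s', y :: t' => (x < y) || ((x == y) && lex_lt s' t')
  end.

Definition chr (T : seq nat) (i : nat) : nat := nth 0 T i.-1.

Definition chrx (T : seq nat) (c : nat) (i : nat) : nat :=
  if i == (size T).+1 then c else chr T i.

Definition suf (T : seq nat) (i : nat) : seq nat := drop i.-1 T.

Definition is_S (T : seq nat) (i : nat) : bool :=
  (i == size T) || lex_lt (suf T i) (suf T i.+1).
Definition is_L (T : seq nat) (i : nat) : bool := ~~ is_S T i.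
Definition is_LMS (T : seq nat) (i : nat) : bool :=
  [&& is_S T i, 1 < i & is_L T i.-1].

(* Main.v *)
Require Import Defs.
From mathcomp Require Import all_boot.

Lemma suf_cons T k : 1 <= k <= size T -> suf T k = chr T k :: suf T k.+1.
Proof. case: k => [//|k] /andP[_ h]; by rewrite /suf /chr /= (drop_nth 0). Qed.

Lemma lex_lt_cons x s t : lex_lt (x::s) (x::t) = lex_lt s t.
Proof. by rewrite /= ltnn eqxx. Qed.

Lemma lex_total s t : s != t -> lex_lt s t || lex_lt t s.
Proof.
elim: s t => [|x s IH] [|y t] //=.
case: (ltngtP x y) => //= <- ne.
apply: IH; apply: contra ne => /eqP -> //.
Qed.

Lemma lex_irr_cons t s : ~~ lex_lt (t :: s) s -> lex_lt s (t :: s).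
Proof.
move=> h; have := @lex_total s (t :: s).
rewrite (negbTE h) orbF; apply.
by apply/eqP => /(f_equal size) /= /eqP; rewrite eqn_leq ltnn andbF.
Qed.

Theorem mainTheorem4 (T : seq nat) (c : nat) (i : nat) :
  (forall k, 1 <= k < size T -> chr T (size T) < chr T k) ->
  c \notin T ->
  2 <= i <= size T ->
  ((is_L T i /\
     forall k, 1 <= k <= size T -> is_L T k -> chr T k = chr T i ->
       ~~ lex_lt (suf T i) (suf T k))
   \/
   (is_LMS T i /\
     forall k, 1 <= k <= size T -> is_LMS T k -> chr T k = chr T i ->
       ~~ lex_lt (suf T k) (suf T i))) ->
  chr T i.-1 != chr T i /\
  (let j := i./2 in
   if chrx T c j.*2 != chrx T c j.*2.+1 then
     [/\ i \in [:: j.*2; j.*2.+1], chrx T c i = chr T i &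
         forall k, k \in [:: j.*2; j.*2.+1] -> chrx T c k = chr T i -> k = i]
   else i = j.*2).
Proof.
move=> Hlast _ /andP[Hi2 HiN] Hcase.
have P1 : chr T i.-1 != chr T i.
  case: i Hi2 HiN Hcase => [|[|n]] // _ HiN Hcase /=; apply/eqP => e.
  have hA : suf T n.+2 = chr T n.+2 :: suf T n.+3 by apply: suf_cons.
  have hB' : suf T n.+1 = chr T n.+1 :: suf T n.+2.
    by apply: suf_cons; rewrite /= ltnW.
  rewrite e in hB'.
  have hN1 : (n.+1 == size T) = false by apply/negbTE; rewrite neq_ltn HiN.
  have SAB : lex_lt (chr T n.+2 :: suf T n.+2) (suf T n.+2) = lex_lt (suf T n.+2) (suf T n.+3).
    by rewrite {2}hA lex_lt_cons.
  have S1 : is_S T n.+1 = lex_lt (suf T n.+2) (suf T n.+3) by rewrite /is_S hN1 hB' SAB.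
  case: Hcase => [[HL H] | [HLMS H]].
  - move: HL; rewrite /is_L /is_S negb_or => /andP [_ HL'].
    have := H n.+1 (ltnW HiN); rewrite /is_L S1 HL' e => /(_ isT erefl).
    rewrite hB' => /negP; apply; apply: lex_irr_cons.
    by rewrite SAB.
  - move: HLMS; rewrite /is_LMS /is_L /= S1 /is_S.
    case/andP => /orP [/eqP HN | h] h'; last by rewrite h in h'.
    have := Hlast n.+1; rewrite -HN /= ltnSn => /(_ isT).
    by rewrite e ltnn.
split => //.
rewrite /=.
have hx : forall k, k <= size T -> chrx T c k = chr T k.
  by move=> k hk; rewrite /chrx ifN // neq_ltn ltnS hk.
set j := i./2.
have hi : i = j.*2 \/ i = j.*2.+1.
  rewrite /j; case: (boolP (odd i)) => h; [right|left]; rewrite ?(odd_halfK h) ?(even_halfK h) //.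
  by rewrite prednK // (leq_trans _ Hi2).
case: ifP => [/negP ne | /negbFE /eqP eq].
  have hxi := hx i HiN.
  split => //.
    by case: hi => ->; rewrite !inE eqxx ?orbT.
  move=> k; rewrite !inE => /orP [] /eqP -> h; case: hi => hi' //;
    exfalso; apply: ne; rewrite h -hxi hi' //.
case: hi => // hi'; exfalso; move/negP: P1; apply.
have hj : j.*2 <= size T by apply: ltnW; rewrite -hi'.
by rewrite -!hx ?hi' //= ?eq // -hi' HiN.
Qed.
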